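(* Let $\mathfrak{X}=(X,\{R_i\}_{i=0}^{d+1})$ be a commutative association scheme with $R_d^{\top}=R_{d+1}$ and $R_i^{\top}=R_i$ for $0\leq i\leq d-1$, and let $\tilde{\mathfrak{X}}=(X,\{\tilde R_i\}_{i=0}^{d})$ be its symmetrization, where $\tilde R_i=R_i$ for $0\le i\le d-1$ and $\tilde R_d=R_d\cup R_{d+1}$. Suppose that the graph $(X,R_d\cup R_{d+1})$ generates $\tilde{\mathfrak{X}}$. Then: (i) the adjacency matrix of the digraph $(X,R_d)$ has exactly $d+2$ distinct eigenvalues; (ii) the digraph $(X,R_d)$ generates the association scheme $\mathfrak{X}$.
   Context: A $d$-class association scheme $(X,\{R_i\}_{i=0}^d)$ consists of a finite set $X$ and a partition of $X\times X$ into nonempty relations $R_0,\dots,R_d$ such that $R_0=\{(x,x):x\in X\}$, each transpose $R_i^\top=\{(y,x):(x,y)\in R_i\}$ equals some $R_{i'}$, and for all $i,j,l$ the number of $z$ with $(x,z)\in R_i,(z,y)\in R_j$ is a constant $p_{i,j}^l$ whenever $(x,y)\in R_l$. It is commutative if $p^l_{i,j}=p^l_{j,i}$ for all $i,j,l$. The adjacency matrix $A_i$ of $R_i$ is the $X\times X$ $01$-matrix with $(x,y)$-entry $1$ iff $(x,y)\in R_i$; the Bose–Mesner algebra $\mathcal M$ is the complex algebra spanned by $A_0,\dots,A_d$. The symmetrization $(X,\{R_0\}\cup\{R_i\cup R_i^\top\})$ is again an association scheme. For a relation $R\subseteq X\times X$ not meeting the diagonal, $(X,R)$ is a digraph (a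 graph if $R$ is symmetric) whose adjacency matrix is the $01$-matrix of $R$, and its eigenvalues are those of that matrix. A (di)graph with adjacency matrix $A$ generates a commutative association scheme if $A$ generates its Bose–Mesner algebra $\mathcal M$, i.e. every element of $\mathcal M$ is a polynomial in $A$. *)

(* Defs.v *)
From HB Require Import structures.
From mathcomp Require Import all_boot all_order all_algebra all_field.
Set Implicit Arguments. Unset Strict Implicit. Unset Printing Implicit Defensive.
Import Order.TTheory GRing.Theory Num.Theory.
Local Open Scope ring_scope.

(* Vertex set X is modelled as 'I_N; a partition of X x X into n relations
   R_0..R_{n-1} is modelled by the map r : X -> X -> 'I_n, (x,y) \in R_i iff r x y = i. *)

Definition is_assoc_scheme (N n : nat) (r : 'I_N.+1 -> 'I_N.+1 -> 'I_n) : Prop :=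
  [/\
      (exists i0 : 'I_n, i0 = 0%N :> nat /\ forall x y, (r x y == i0) = (x == y)),
      (forall i : 'I_n, exists x y, r x y = i),
      (forall i : 'I_n, exists i' : 'I_n, forall x y, (r y x == i) = (r x y == i')) &
      (forall (i j : 'I_n) (x y x' y' : 'I_N.+1), r x y = r x' y' ->
         #|[set z | (r x z == i) && (r z y == j)]|
         = #|[set z | (r x' z == i) && (r z y' == j)]|)].

Definition is_commutative_scheme (N n : nat) (r : 'I_N.+1 -> 'I_N.+1 -> 'I_n) : Prop :=
  is_assoc_scheme r /\
  forall (i j : 'I_n) (x y : 'I_N.+1),
    #|[set z | (r x z == i) && (r z y == j)]| = #|[set z | (r x z == j) && (r z y == i)]|.

Definition adjmx (N n : nat) (r : 'I_N.+1 -> 'I_N.+1 -> 'I_n) (i : 'I_n) : 'M[algC]_N.+1 :=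
  \matrix_(x, y) ((r x y == i)%:R).

(* A generates the Bose-Mesner algebra span{A_0..A_{n-1}}: every element of it
   is a polynomial in A *)
Definition generates_BM (N n : nat) (r : 'I_N.+1 -> 'I_N.+1 -> 'I_n) (A : 'M[algC]_N.+1) : Prop :=
  forall c : 'I_n -> algC, exists p : {poly algC},
    horner_mx A p = \sum_(i < n) c i *: adjmx r i.

Definition num_distinct_eigenvalues (N : nat) (A : 'M[algC]_N.+1) (k : nat) : Prop :=
  exists s : seq algC, [/\ uniq s, size s = k & forall a, eigenvalue A a <-> a \in s].

Definition symmetrize (N d : nat) (r : 'I_N.+1 -> 'I_N.+1 -> 'I_d.+2) : 'I_N.+1 -> 'I_N.+1 -> 'I_d.+1 :=
  fun x y => inord (minn (r x y) d).

(* Main.v *)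
Require Import Defs.
From mathcomp Require Import all_boot all_order all_algebra all_field.
Local Open Scope ring_scope.

Module Helpers.
Set Implicit Arguments. Unset Strict Implicit. Unset Printing Implicit Defensive.
Import Order.TTheory GRing.Theory Num.Theory Num.Def.

Lemma interp (F : fieldType) (s : seq F) (f : F -> F) : uniq s ->
  exists q : {poly F}, forall a, a \in s -> q.[a] = f a.
Proof.
elim: s => [|b s IH] /=; first by exists 0.
case/andP=> bs us; have [q Hq] := IH us.
pose P := \prod_(c <- s) ('X - c%:P).
have Pb : P.[b] != 0.
  rewrite horner_prod prodf_seq_neq0; apply/allP => c cs /=.
  by rewrite hornerXsubC subr_eq0; apply: contraNneq bs => ->.
exists (q + ((f b - q.[b]) / P.[b]) *: P) => a; rewrite inE => /orP[/eqP->|as_].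
  by rewrite hornerD hornerZ mulfVK // addrC subrK.
rewrite hornerD hornerZ.
have -> : P.[a] = 0.
  by rewrite horner_prod (big_rem a) //= hornerXsubC subrr mul0r.
by rewrite mulr0 addr0 Hq.
Qed.

Lemma horner_mx_comp n (A : 'M[algC]_n.+1) (s p : {poly algC}) :
  horner_mx (horner_mx A s) p = horner_mx A (p \Po s).
Proof.
elim/poly_ind: p => [|p c IH]; first by rewrite comp_poly0 !rmorph0.
rewrite comp_polyD comp_polyM comp_polyX comp_polyC !rmorphD !rmorphM /=.
by rewrite !horner_mx_C horner_mx_X IH.
Qed.

Lemma sum_ind (m : nat) (c : 'I_m -> algC) (k : 'I_m) :
  \sum_(i < m) c i * ((k == i)%:R) = c k.
Proof.
rewrite (bigD1 k) //= eqxx mulr1 big1 ?addr0 // => i /negPf.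
by rewrite eq_sym => ->; rewrite mulr0.
Qed.

Lemma sum_card (T : finType) (P : pred T) :
  \sum_(z : T) ((P z)%:R : algC) = (#|[set z | P z]|)%:R.
Proof.
rewrite -sum1_card natr_sum [in RHS]big_mkcond /=.
by apply: eq_bigr => z _; rewrite inE; case: (P z).
Qed.

Lemma witnesses (N n : nat) (r : 'I_N.+1 -> 'I_N.+1 -> 'I_n) :
  (forall i : 'I_n, exists x y, r x y = i) ->
  exists w : 'I_n -> 'I_N.+1 * 'I_N.+1, forall i, r (w i).1 (w i).2 = i.
Proof.
move=> H.
have H' : forall i : 'I_n, exists xy : 'I_N.+1 * 'I_N.+1, r xy.1 xy.2 = i.
  by move=> i; have [x [y <-]] := H i; exists (x, y).
exact: (fin_all_exists H').
Qed.

Lemma mul_adj_entry (N n : nat) (r : 'I_N.+1 -> 'I_N.+1 -> 'I_n) i j x y :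
  (adjmx r i *m adjmx r j) x y = (#|[set z | (r x z == i) && (r z y == j)]|)%:R.
Proof.
rewrite mxE -sum_card; apply: eq_bigr => z _.
by rewrite !mxE -natrM mulnb.
Qed.

Lemma adj_comm (N n : nat) (r : 'I_N.+1 -> 'I_N.+1 -> 'I_n) i j :
  is_commutative_scheme r ->
  adjmx r i *m adjmx r j = adjmx r j *m adjmx r i.
Proof.
case=> _ Hc; apply/matrixP => x y.
by rewrite !mul_adj_entry Hc.
Qed.

Lemma adj_prod_span (N n : nat) (r : 'I_N.+1 -> 'I_N.+1 -> 'I_n) i j :
  is_assoc_scheme r ->
  exists c : 'I_n -> algC, adjmx r i *m adjmx r j = \sum_l c l *: adjmx r l.
Proof.
case=> _ Hne _ Hp; have [w Hw] := witnesses Hne.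
exists (fun l => (#|[set z | (r (w l).1 z == i) && (r z (w l).2 == j)]|)%:R).
apply/matrixP => x y; rewrite mul_adj_entry summxE.
under eq_bigr => l _ do rewrite !mxE.
rewrite sum_ind; apply: congr1; apply: Hp.
by rewrite Hw.
Qed.

Lemma adj_diag (N n : nat) (r : 'I_N.+1 -> 'I_N.+1 -> 'I_n) :
  is_assoc_scheme r -> exists i0, adjmx r i0 = 1%:M.
Proof.
case=> [[i0 [_ H]] _ _ _]; exists i0; apply/matrixP => x y.
by rewrite !mxE H.
Qed.

Lemma adj_real (N n : nat) (r : 'I_N.+1 -> 'I_N.+1 -> 'I_n) i :
  map_mx Num.conj_op (adjmx r i) = adjmx r i.
Proof. by apply/matrixP => x y; rewrite !mxE rmorph_nat. Qed.

Lemma adj_tr (N d : nat) (r : 'I_N.+1 -> 'I_N.+1 -> 'I_d.+2) :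
  (forall x y, (r x y == d :> nat) = (r y x == d.+1 :> nat)) ->
  (adjmx r (inord d))^T = adjmx r (inord d.+1).
Proof.
move=> H; apply/matrixP => x y; rewrite !mxE.
by rewrite -!(inj_eq val_inj) /= !inordK // H.
Qed.

Lemma ord3 d (k : 'I_d.+2) : [\/ (k < d)%N, k = inord d | k = inord d.+1].
Proof.
case: (ltngtP k d) => [lt|gt|eq]; [by constructor 1| constructor 3| constructor 2];
  apply/val_inj; rewrite /= inordK //.
by have := ltn_ord k; rewrite ltnS => le; apply/eqP; rewrite eqn_leq le gt.
Qed.

Lemma inord_neq d : (inord d : 'I_d.+2) != inord d.+1.
Proof. by rewrite -(inj_eq val_inj) /= !inordK // ltn_eqF. Qed.

Lemma symm_top (N d : nat) (r : 'I_N.+1 -> 'I_N.+1 -> 'I_d.+2) :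
  adjmx (symmetrize r) ord_max = adjmx r (inord d) + adjmx r (inord d.+1).
Proof.
apply/matrixP => x y; rewrite !mxE /symmetrize.
rewrite -(inj_eq val_inj) /= inordK ?ltnS ?geq_minr //.
case: (ord3 (r x y)) => [lt|->|->].
- rewrite (minn_idPl (ltnW lt)) (ltn_eqF lt).
  rewrite -!(inj_eq val_inj) /= !inordK // (ltn_eqF lt).
  by rewrite (@ltn_eqF _ d.+1) ?addr0 // ltnW.
- rewrite -!(inj_eq val_inj) /= !inordK // minnn eqxx ltn_eqF //.
  by rewrite addr0.
- rewrite -!(inj_eq val_inj) /= !inordK // (minn_idPr (leqnSn d)) !eqxx.
  by rewrite gtn_eqF // add0r.
Qed.

Lemma symm_decomp (N d : nat) (r : 'I_N.+1 -> 'I_N.+1 -> 'I_d.+2) (c : 'I_d.+2 -> algC) :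
  \sum_(i < d.+2) c i *: adjmx r i =
  \sum_(i < d.+1) c (inord i) *: adjmx (symmetrize r) i
    - (c (inord d) - c (inord d.+1)) *: adjmx r (inord d.+1).
Proof.
apply/matrixP => x y; rewrite !mxE !summxE.
under eq_bigr => i _ do rewrite !mxE.
under [in RHS]eq_bigr => i _ do rewrite !mxE.
rewrite !sum_ind /symmetrize inordK ?ltnS ?geq_minr //.
case: (ord3 (r x y)) => [lt|->|->].
- rewrite (minn_idPl (ltnW lt)) inord_val.
  rewrite -!(inj_eq val_inj) /= !inordK // (@ltn_eqF _ d.+1) ?mulr0 ?subr0 //.
  exact: ltnW.
- rewrite inordK // minnn -!(inj_eq val_inj) /= !inordK // ltn_eqF //.
  by rewrite mulr0 subr0.
- rewrite inordK // (minn_idPr (leqnSn d)) eqxx mulr1.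
  by rewrite opprB addrC subrK.
Qed.

Lemma gen_full (N d : nat) (r : 'I_N.+1 -> 'I_N.+1 -> 'I_d.+2) (q : {poly algC}) :
  horner_mx (adjmx r (inord d)) q = adjmx r (inord d.+1) ->
  generates_BM (symmetrize r) (adjmx (symmetrize r) ord_max) ->
  generates_BM r (adjmx r (inord d)).
Proof.
move=> Hq Hg c; have [p Hp] := Hg (fun i => c (inord i)).
exists (p \Po ('X + q) - (c (inord d) - c (inord d.+1)) *: q).
rewrite rmorphB /= horner_mxZ -horner_mx_comp rmorphD /= horner_mx_X Hq.
by rewrite -symm_top Hp symm_decomp.
Qed.

Definition Mmx (N n : nat) (r : 'I_N.+1 -> 'I_N.+1 -> 'I_n) : 'M[algC]_(n, N.+1 * N.+1) :=
  \matrix_i mxvec (adjmx r i).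

Lemma span_sub (N n : nat) (r : 'I_N.+1 -> 'I_N.+1 -> 'I_n) (c : 'I_n -> algC) :
  (mxvec (\sum_l c l *: adjmx r l) <= Mmx r)%MS.
Proof.
rewrite linear_sum /=; apply: summx_sub => l _; rewrite linearZ /=.
by apply: scalemx_sub; rewrite -(rowK (fun i => mxvec (adjmx r i))) row_sub.
Qed.

Lemma sub_span (N n : nat) (r : 'I_N.+1 -> 'I_N.+1 -> 'I_n) (X : 'M_N.+1) :
  (mxvec X <= Mmx r)%MS -> exists c : 'I_n -> algC, X = \sum_l c l *: adjmx r l.
Proof.
case/submxP => u Hu; exists (fun l => u 0 l); apply: (can_inj mxvecK).
rewrite Hu mulmx_sum_row linear_sum /=; apply: eq_bigr => l _.
by rewrite linearZ /= rowK.
Qed.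

Lemma rank_Mmx (N n : nat) (r : 'I_N.+1 -> 'I_N.+1 -> 'I_n) :
  is_assoc_scheme r -> \rank (Mmx r) = n.
Proof.
case=> _ Hne _ _; have [w Hw] := witnesses Hne.
pose Q : 'M[algC]_(N.+1 * N.+1, n) :=
  \matrix_(k, j) (k == mxvec_index (w j).1 (w j).2)%:R.
have HQ : Mmx r *m Q = 1%:M.
  apply/matrixP => i j; rewrite !mxE.
  rewrite (bigD1 (mxvec_index (w j).1 (w j).2)) //= big1 => [|k nk].
    by rewrite !mxE eqxx mulr1 addr0 mxvecE mxE Hw eq_sym.
  by rewrite !mxE (negPf nk) mulr0.
apply/eqP; rewrite eqn_leq rank_leq_row /=.
by rewrite -{1}(mxrank1 algC n) -HQ mxrankM_maxl.
Qed.

Lemma adj_sub (N n : nat) (r : 'I_N.+1 -> 'I_N.+1 -> 'I_n) l :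
  (mxvec (adjmx r l) <= Mmx r)%MS.
Proof. by rewrite -(rowK (fun i => mxvec (adjmx r i))) row_sub. Qed.

Lemma sum_delta (N n : nat) (r : 'I_N.+1 -> 'I_N.+1 -> 'I_n) i :
  \sum_l (l == i)%:R *: adjmx r l = adjmx r i.
Proof.
rewrite (bigD1 i) //= eqxx scale1r big1 ?addr0 // => l /negPf ->.
by rewrite scale0r.
Qed.

Lemma degree_eq (N d : nat) (r : 'I_N.+1 -> 'I_N.+1 -> 'I_d.+2) :
  is_assoc_scheme r -> generates_BM r (adjmx r (inord d)) ->
  degree_mxminpoly (adjmx r (inord d)) = d.+2.
Proof.
move=> Hs Hg; set A := adjmx r (inord d); set k := degree_mxminpoly A.
have rAd : \rank (powers_mx A k) = k := eqnP (minpoly_mx_free A).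
have rM := rank_Mmx Hs.
apply/eqP; rewrite eqn_leq; apply/andP; split.
  rewrite -rAd -[X in (_ <= X)%N]rM; apply: mxrankS; apply/row_subP => i.
  rewrite rowK; elim: (nat_of_ord i) => [|m IH].
    have [i0 Hi0] := adj_diag Hs; rewrite expr0.
    by have := adj_sub r i0; rewrite Hi0.
  have [c Hc] := sub_span IH.
  rewrite exprSr Hc mulr_suml linear_sum /=; apply: summx_sub => l _.
  rewrite -scalerAl linearZ /=; apply: scalemx_sub.
  have [e He] := adj_prod_span l (inord d) Hs.
  by rewrite -mulmxE He span_sub.
rewrite -rM -rAd; apply: mxrankS; apply/row_subP => i.
rewrite rowK; have [p Hp] := Hg (fun l => (l == i)%:R).
by rewrite sum_delta in Hp; rewrite -Hp horner_mx_mem.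
Qed.
Section Spec.
Local Open Scope sesquilinear_scope.

Lemma normal_spec n (A : 'M[algC]_n.+1) :
  A ^ conjC = A -> A *m A^T = A^T *m A ->
  (exists q, horner_mx A q = A^T) /\
  (exists s, uniq s /\ mxminpoly A = \prod_(x <- s) ('X - x%:P)).
Proof.
move=> Areal Anorm.
have AtT : A ^t* = A^T by rewrite -map_trmx Areal.
have /orthomx_spectralP Aeq : A \is normalmx by apply/normalmxP; rewrite AtT.
set P := spectralmx A in Aeq; set D := spectral_diag A in Aeq.
have Pu : P \is unitarymx by exact: spectral_unitarymx.
have Pun : P \in unitmx by exact: spectral_unit.
have ATeq : A^T = invmx P *m diag_mx (map_mx conjC D) *m P.
  rewrite -AtT {1}Aeq !trmx_mul !map_mxM invmx_unitary // trmxCK.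
  by rewrite tr_diag_mx map_diag_mx mulmxA.
set s := undup [seq D 0 i | i <- enum 'I_n.+1].
split.
  have [q Hq] := interp conjC (undup_uniq [seq D 0 i | i <- enum 'I_n.+1]).
  exists q; rewrite ATeq {1}Aeq horner_mx_uconjC // horner_mx_diag.
  congr (_ *m diag_mx _ *m _); apply/matrixP => i j; rewrite !mxE ord1 Hq //.
  by rewrite mem_undup map_f // mem_enum.
exists s; split; first exact: undup_uniq.
rewrite Aeq -mxminpoly_diag.
have -> : invmx P *m diag_mx D *m P = conjmx (invmx P) (diag_mx D).
  by rewrite /conjmx pinvmxE ?unitmx_inv // invmxK.
by rewrite mxminpoly_uconj // unitmx_inv.
Qed.
End Spec.

Lemma main_aux (N d : nat) (r : 'I_N.+1 -> 'I_N.+1 -> 'I_d.+2) :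
  is_commutative_scheme r ->
  (forall x y, (r x y == d :> nat) = (r y x == d.+1 :> nat)) ->
  generates_BM (symmetrize r) (adjmx (symmetrize r) ord_max) ->
  num_distinct_eigenvalues (adjmx r (inord d)) d.+2 /\
  generates_BM r (adjmx r (inord d)).
Proof.
move=> Hc Ht Hg; set A := adjmx r (inord d).
have AT : A^T = adjmx r (inord d.+1) by exact: adj_tr.
have [[q Hq] [s [us Hs]]] : _ := normal_spec (adj_real r (inord d))
   (etrans (congr1 _ AT) (etrans (adj_comm _ _ Hc) (congr1 (mulmx^~ _) (esym AT)))).
have Hgen : generates_BM r A by apply: (gen_full (q := q)) Hg; rewrite -AT.
split => //; exists s; split => //.
  have := size_mxminpoly A; rewrite Hs size_prod_XsubC degree_eq //.
  - by case.
  - by case: Hc.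
by move=> a; rewrite eigenvalue_root_min Hs root_prod_XsubC.
Qed.
End Helpers.

Theorem theorem1p2 (N d : nat) (r : 'I_N.+1 -> 'I_N.+1 -> 'I_d.+2) :
  is_commutative_scheme r ->
  (forall x y, (r x y == d :> nat) = (r y x == d.+1 :> nat)) ->
  (forall x y, (r x y < d)%N -> r y x = r x y) ->
  generates_BM (symmetrize r) (adjmx (symmetrize r) ord_max) ->
  num_distinct_eigenvalues (adjmx r (inord d)) d.+2 /\
  generates_BM r (adjmx r (inord d)).
Proof.
move=> Hc Ht _ Hg; exact: Helpers.main_aux.
Qed.
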